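(* Let $n\ge0$ and $\tau\in Y_n$. Then $\tau$ splits if and only if $\tau\in Y^{be}\cup Y^{bo}$. In particular, for $n\ge0$, $$\varphi(Y^{be}_{2n})=\{P\in\mathrm{NCP}_{2n}: P=Q_1\cup Q_2\text{ for some }Q_1,Q_2\in\mathrm{NCP}_n\}.$$
   Context: Planar binary trees: $Y_0=\{|\}$, $Y_n=\{\sigma\vee\tau:\sigma\in Y_k,\tau\in Y_l,k+l=n-1\}$ ($\sigma\vee\tau$: root with left subtree $\sigma$, right subtree $\tau$). The internal vertices of $\tau\in Y_n$ are numbered $1,\dots,n$ in left-to-right order (recursively: vertices of left subtree, root, vertices of right subtree). A right arm of $\tau$ is a class of the equivalence relation on vertices generated by ''$x$ is the right child of $y$''. $\tau$ splits if every right arm consists of numbers of the same parity. $Y^{be}$ and $Y^{bo}$ are defined jointly recursively by $Y^{be}=\{|\}\cup\{\sigma\vee\rho:\sigma\in Y^{bo},\rho\in Y^{be}\}$ and $Y^{bo}=\{\sigma\vee\rho:\sigma,\rho\in Y^{be}\}$; all trees in $Y^{be}$ have an even number of vertices and those in $Y^{bo}$ an odd number; $Y^{be}_{2n}$ is the set of elements of $Y^{be}$ with $2n$ vertices. $\mathrm{NCP}_n$: noncrossing partitions of $[n]$. For partitions $Q_1,Q_2$ of $[n]$, $Q_1\cup Q_2$ is the partition of $[2n]$ with blocks $\{2i-1:i\in V\}$ ($V\in Q_1$) and $\{2i:i\in W\}$ ($W\in Q_2$). $\varphi:Y\to\mathrm{NCP}$ sends $\tau\in Y_n$ to the partition of $[n]$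 whose blocks are the right arms of $\tau$ (equivalently $\varphi(|)=\emptyset$, $\varphi(\sigma\vee\tau)=\varphi(\sigma)*(|\,\underline*\,\varphi(\tau))$, with $*$ concatenation and $\underline*$ concatenation followed by merging the blocks containing the last elements of each part). *)

(* Defs.v *)
From mathcomp Require Import all_boot.
Set Implicit Arguments. Unset Strict Implicit. Unset Printing Implicit Defensive.

(* Planar binary trees: Leaf = |, Node s t = s \/ t. *)
Inductive tree : Type := Leaf | Node of tree & tree.

Fixpoint tree_size (t : tree) : nat :=
  match t with Leaf => 0 | Node l r => (tree_size l + tree_size r).+1 end.

(* Convention: internal vertices are numbered 0,...,n-1 (in-order, i.e. left
   subtree, root, right subtree); vertex k here is vertex k+1 of the paper.
   [rchild_pairs t off] lists the pairs (y, x) such that x is the right child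
   of y, with numbering shifted by [off]. *)
Fixpoint rchild_pairs (t : tree) (off : nat) : seq (nat * nat) :=
  match t with
  | Leaf => [::]
  | Node l r =>
      let root := off + tree_size l in
      rchild_pairs l off ++ rchild_pairs r root.+1 ++
      match r with
      | Leaf => [::]
      | Node rl _ => [:: (root, root.+1 + tree_size rl)]
      end
  end.

Definition rc_sym (t : tree) (m : nat) : rel 'I_m :=
  fun x y => ((val y, val x) \in rchild_pairs t 0) || ((val x, val y) \in rchild_pairs t 0).
Arguments rc_sym t m : clear implicits.

Definition phiN (t : tree) (m : nat) : {set {set 'I_m}} :=
  [set [set y : 'I_m | connect (rc_sym t m) x y] | x : 'I_m].
Arguments phiN t m : clear implicits.

Definition phi (t : tree) : {set {set 'I_(tree_size t)}} := phiN t (tree_size t).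

(* tau splits: every right arm consists of numbers of the same parity
   (the 0-based shift does not affect "same parity"). *)
Definition splits (t : tree) : Prop :=
  forall B, B \in phi t -> forall x y : 'I_(tree_size t), x \in B -> y \in B -> odd x = odd y.

Inductive Ybe : tree -> Prop :=
  | Ybe_leaf : Ybe Leaf
  | Ybe_node s r : Ybo s -> Ybe r -> Ybe (Node s r)
with Ybo : tree -> Prop :=
  | Ybo_node s r : Ybe s -> Ybe r -> Ybo (Node s r).

Definition noncrossing (m : nat) (P : {set {set 'I_m}}) : Prop :=
  forall (a b c d : 'I_m) (B B' : {set 'I_m}),
    a < b -> b < c -> c < d -> B \in P -> B' \in P ->
    a \in B -> c \in B -> b \in B' -> d \in B' -> B = B'.

Definition NCP (m : nat) (P : {set {set 'I_m}}) : Prop :=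
  partition P [set: 'I_m] /\ noncrossing P.

(* Q1 \cup Q2 : blocks {2i-1 : i in V} (V in Q1) and {2i : i in W} (W in Q2);
   0-based: paper's 2i-1 (i=1..n) is 2j (j=0..n-1), paper's 2i is 2j+1. *)
Definition emb_odd (n : nat) (V : {set 'I_n}) : {set 'I_(n.*2)} :=
  [set j : 'I_(n.*2) | [exists i in V, val j == (val i).*2]].
Definition emb_even (n : nat) (W : {set 'I_n}) : {set 'I_(n.*2)} :=
  [set j : 'I_(n.*2) | [exists i in W, val j == (val i).*2.+1]].

Definition pcup (n : nat) (Q1 Q2 : {set {set 'I_n}}) : {set {set 'I_(n.*2)}} :=
  [set emb_odd V | V in Q1] :|: [set emb_even W | W in Q2].

(* Main.v *)
Require Import Defs.
From mathcomp Require Import all_boot zify.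


Fixpoint rep (t : tree) (off x : nat) : nat :=
  match t with
  | Leaf => x
  | Node l r => let root := off + tree_size l in
      if x < root then rep l off x else if x == root then root + tree_size r
      else rep r root.+1 x
  end.

Lemma R1 t : forall off x, off <= x < off + tree_size t ->
  x <= rep t off x < off + tree_size t.
Proof.
elim: t => [|l IHl r IHr] off x /=; first lia.
move=> Hx.
case: ltnP => H1.
  have := IHl off x; lia.
case: eqP => H2; first lia.
have := IHr (off + tree_size l).+1 x; lia.
Qed.

Lemma R2 t : forall off a b, (a, b) \in rchild_pairs t off ->
  [/\ off <= a, a < b, b < off + tree_size t & rep t off a = rep t off b].
Proof.
elim: t => [|l IHl r IHr] off a b //=.
rewrite !mem_cat => /or3P [H|H|H].
- have [h1 h2 h3 h4] := IHl _ _ _ H.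
  rewrite h3 (leq_trans h2 (ltnW h3)) h4; split => //; lia.
- have [h1 h2 h3 h4] := IHr _ _ _ H.
  have -> : (a < off + tree_size l) = false by lia.
  have -> : (b < off + tree_size l) = false by lia.
  have -> : (a == off + tree_size l) = false by lia.
  have -> : (b == off + tree_size l) = false by lia.
  split => //; lia.
- move: H; case: r IHr => [|rl rr] IHr //.
  rewrite inE => /eqP [-> ->] /=.
  rewrite ltnn eqxx.
  have -> : (off + tree_size l).+1 + tree_size rl < off + tree_size l = false by lia.
  have -> : ((off + tree_size l).+1 + tree_size rl == off + tree_size l) = false by lia.
  rewrite ltnn eqxx.
  split; lia.
Qed.

Lemma R3 t : forall off x, off <= x < off + tree_size t -> x < rep t off x ->
  exists y : nat, (x, y) \in rchild_pairs t off.
Proof.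
elim: t => [|l IHl r IHr] off x //=; first by rewrite ltnn.
move=> Hx.
case: (ltnP x (off + tree_size l)) => H1.
  move=> H; have [y Hy] := IHl off x ltac:(lia) H.
  by exists y; rewrite mem_cat Hy.
case: (x =P off + tree_size l) => H2.
  subst x; clear Hx; case: r IHr => [|rl rr] IHr /=; first by rewrite addn0 ltnn.
  move=> _; eexists; rewrite !mem_cat inE; apply/orP; right; apply/orP; right; exact: eqxx.
move=> H; have [y Hy] := IHr (off + tree_size l).+1 x ltac:(lia) H.
by exists y; rewrite !mem_cat Hy orbT.
Qed.

Lemma R4 t : forall off x z, off <= x < off + tree_size t -> x <= z <= rep t off x ->
  rep t off z <= rep t off x.
Proof.
elim: t => [|l IHl r IHr] off x z /=; first lia.
move=> Hx.
case: (ltnP x (off + tree_size l)) => H1.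
  move=> Hz; have := R1 l off x ltac:(lia).
  move=> Hr.
  have -> : z < off + tree_size l by lia.
  apply: IHl; lia.
case: (x =P off + tree_size l) => H2.
  move=> Hz.
  case: (ltnP z (off + tree_size l)) => H3; first lia.
  case: (z =P off + tree_size l) => H4; first lia.
  have := R1 r (off + tree_size l).+1 z ltac:(lia); lia.
move=> Hz.
have -> : z < off + tree_size l = false by lia.
have -> : (z == off + tree_size l) = false by lia.
apply: IHr; lia.
Qed.

Lemma rep_idem t x : x < tree_size t -> rep t 0 (rep t 0 x) = rep t 0 x.
Proof.
move=> Hx; have h1 := R1 t 0 x ltac:(lia).
have h2 := R4 t 0 x (rep t 0 x) ltac:(lia) ltac:(lia).
have h3 := R1 t 0 (rep t 0 x) ltac:(lia).
lia.
Qed.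

Lemma rep_nc4 t a b c d : a < b -> b < c -> c < d -> d < tree_size t ->
  rep t 0 a = rep t 0 c -> rep t 0 b = rep t 0 d -> rep t 0 a = rep t 0 b.
Proof.
move=> ab bc cd dm Hac Hbd.
have ra := R1 t 0 a ltac:(lia).
have rb := R1 t 0 b ltac:(lia).
have rc := R1 t 0 c ltac:(lia).
have rd := R1 t 0 d ltac:(lia).
have h1 := R4 t 0 a b ltac:(lia) ltac:(lia).
have h2 := R4 t 0 b c ltac:(lia) ltac:(lia).
lia.
Qed.
Set Implicit Arguments. Unset Strict Implicit.

Lemma connect_inv (T : finType) (e : rel T) (f : T -> nat) :
  (forall x y, e x y -> f x = f y) -> forall x y, connect e x y -> f x = f y.
Proof.
move=> H x y /connectP [p pth ->].
elim: p x pth => //= z p IH x /andP [exz pth].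
by rewrite (H _ _ exz); apply: IH.
Qed.

Section Conn.
Variables (t : tree) (m : nat).
Hypothesis Hm : tree_size t = m.

Lemma rc_sym_symm : symmetric (rc_sym t m).
Proof. by move=> x y; rewrite /rc_sym orbC. Qed.

Lemma conn_to_rep : forall (x z : 'I_m), val z = rep t 0 x -> connect (rc_sym t m) x z.
Proof.
move=> x z.
have [d Hd] : exists d, rep t 0 x - x <= d by exists (rep t 0 x - x).
elim: d x Hd z => [|d IH] x Hd z Hz; have xm := ltn_ord x; have zm := ltn_ord z;
  have h := R1 t 0 x ltac:(lia).
  have -> : z = x by apply: val_inj; rewrite /= Hz; lia.
  exact: connect0.
case: (ltnP x (rep t 0 x)) => Hlt; last first.
  have -> : z = x by apply: val_inj; rewrite /= Hz; lia.
  exact: connect0.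
have [y Hy] := R3 t 0 x ltac:(lia) Hlt.
have [h1 h2 h3 h4] := R2 t 0 x y Hy.
have ym : y < m by lia.
apply: (connect_trans (y := Ordinal ym)).
  by apply: connect1; rewrite /rc_sym /= Hy orbT.
have hy := R1 t 0 y ltac:(lia).
apply: (IH (Ordinal ym)) => /=.
- rewrite -h4. lia. - rewrite -h4 -Hz. done.
Qed.

Lemma conn (x y : 'I_m) : connect (rc_sym t m) x y = (rep t 0 x == rep t 0 y).
Proof.
apply/idP/eqP.
  apply: (@connect_inv _ _ (fun z : 'I_m => rep t 0 z)).
  move=> a b; rewrite /rc_sym => /orP [] /(R2 t 0) [_ _ _ ->] //.
move=> E; have xm := ltn_ord x.
have hx := R1 t 0 x ltac:(lia).
have zm : rep t 0 x < m by lia.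
apply: (connect_trans (y := Ordinal zm)); first exact: conn_to_rep.
rewrite (sym_connect_sym rc_sym_symm).
by apply: conn_to_rep; rewrite /= E.
Qed.

End Conn.

Definition PF (m : nat) (g : 'I_m -> nat) := preim_partition g [set: 'I_m].

Lemma phiN_PF t m : tree_size t = m -> phiN t m = PF (fun x : 'I_m => rep t 0 x).
Proof.
move=> Hm; rewrite /phiN /PF /preim_partition /equivalence_partition.
apply/setP => B; apply/imsetP/imsetP => [] [x _ ->]; exists x => //;
  apply/setP => y; by rewrite !inE conn.
Qed.

Lemma PF_mem m (g : 'I_m -> nat) B : B \in PF g -> exists x, B = [set y | g x == g y].
Proof.
move=> /imsetP [x _ ->]; exists x; apply/setP => y; by rewrite !inE.
Qed.

Lemma PF_blk m (g : 'I_m -> nat) x : [set y | g x == g y] \in PF g.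
Proof.
apply/imsetP; exists x => //; apply/setP => y; by rewrite !inE.
Qed.

Lemma PF_nc m (g : 'I_m -> nat) :
  (forall a b c d : 'I_m, a < b -> b < c -> c < d -> g a = g c -> g b = g d -> g a = g b) ->
  noncrossing (PF g).
Proof.
move=> H a b c d B B' ab bc cd /PF_mem [x ->] /PF_mem [x' ->].
rewrite !inE => /eqP h1 /eqP h2 /eqP h3 /eqP h4.
have E : g x = g x'.
  rewrite h1 h3; apply: (H a b c d ab bc cd); congruence.
by apply/setP => y; rewrite !inE E.
Qed.

Lemma PF_NCP m (g : 'I_m -> nat) :
  (forall a b c d : 'I_m, a < b -> b < c -> c < d -> g a = g c -> g b = g d -> g a = g b) ->
  NCP (PF g).
Proof. by move=> H; split; [exact: preim_partitionP | exact: PF_nc]. Qed.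

Lemma part_blk m (P : {set {set 'I_m}}) (g : 'I_m -> nat) :
  partition P [set: 'I_m] ->
  (forall x y : 'I_m, (g x == g y) = [exists B in P, (x \in B) && (y \in B)]) ->
  forall B x, B \in P -> x \in B -> B = [set y | g x == g y].
Proof.
move=> /and3P [_ tI _] H B x BP xB.
apply/setP => y; rewrite inE H; apply/idP/existsP.
  by move=> yB; exists B; rewrite BP xB yB.
move=> [B' /and3P [B'P xB' yB']].
by rewrite -(def_pblock tI BP xB) (def_pblock tI B'P xB').
Qed.

Lemma PF_eq m (P : {set {set 'I_m}}) (g : 'I_m -> nat) :
  partition P [set: 'I_m] ->
  (forall x y : 'I_m, (g x == g y) = [exists B in P, (x \in B) && (y \in B)]) ->
  P = PF g.
Proof.
move=> Hp H; have Hp' := Hp; move: Hp' => /and3P [/eqP cov tI n0].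
apply/setP => B; apply/idP/idP.
  move=> BP; have: B != set0 by apply: contraNneq n0 => <-.
  case/set0Pn => x xB.
  by rewrite (part_blk Hp H BP xB) PF_blk.
move=> /PF_mem [x ->].
have : x \in cover P by rewrite cov inE.
move=> /bigcupP [B0 B0P xB0].
by rewrite -(part_blk Hp H B0P xB0).
Qed.

Fixpoint Yb (t : tree) : bool :=
  match t with Leaf => true | Node l r => [&& Yb l, Yb r & ~~ odd (tree_size r)] end.

Lemma Yb_sp t : Yb t -> forall off x, off <= x < off + tree_size t -> odd (rep t off x) = odd x.
Proof.
elim: t => [|l IHl r IHr] //= /and3P [yl yr er] off x Hx.
case: (ltnP x (off + tree_size l)) => H1.
  apply: IHl => //; lia.
case: (x =P off + tree_size l) => H2.
  by rewrite oddD (negbTE er) addbF H2.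
apply: IHr => //; lia.
Qed.

Lemma sp_Yb t : forall off, (forall x, off <= x < off + tree_size t -> odd (rep t off x) = odd x) -> Yb t.
Proof.
elim: t => [|l IHl r IHr] //= off H.
apply/and3P; split.
- apply: (IHl off) => x Hx.
  have := H x ltac:(lia).
  by have -> : x < off + tree_size l by lia.
- apply: (IHr (off + tree_size l).+1) => x Hx.
  have := H x ltac:(lia).
  have -> : x < off + tree_size l = false by lia.
  by have -> : (x == off + tree_size l) = false by lia.
- have := H (off + tree_size l) ltac:(lia).
  rewrite ltnn eqxx oddD.
  by case: (odd (tree_size r)); case: (odd _).
Qed.

Lemma Yb_be t : (Ybe t <-> Yb t && ~~ odd (tree_size t)) /\ (Ybo t <-> Yb t && odd (tree_size t)).
Proof.
elim: t => [|l [IHl1 IHl2] r [IHr1 IHr2]].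
  split; split => //= H; try exact: Ybe_leaf; inversion H.
split; split.
- inversion 1; subst.
  move/IHl2: H2 => /andP [a b]; move/IHr1: H3 => /andP [c d].
  by rewrite /= a c d /= oddD b (negbTE d).
- rewrite /= => /andP [/and3P [a c d] e].
  constructor; [apply/IHl2 | apply/IHr1]; rewrite ?a ?c ?d //=.
  move: e; rewrite oddD (negbTE d) addbF; by case: (odd _).
- inversion 1; subst.
  move/IHl1: H2 => /andP [a b]; move/IHr1: H3 => /andP [c d].
  by rewrite /= a c d /= oddD (negbTE b) (negbTE d).
- rewrite /= => /andP [/and3P [a c d] e].
  constructor; [apply/IHl1 | apply/IHr1]; rewrite ?a ?c ?d //=.
  move: e; rewrite oddD (negbTE d) addbF; by case: (odd _).
Qed.

Lemma Yb_bebo t : Yb t <-> Ybe t \/ Ybo t.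
Proof.
have [[h1 h2] [h3 h4]] := Yb_be t.
split.
  move=> y; case E: (odd (tree_size t)).
    by right; apply: h4; rewrite y E.
  by left; apply: h2; rewrite y E.
by case=> [/h1|/h3] /andP [].
Qed.

Lemma splits_Yb t : splits t <-> Yb t.
Proof.
rewrite /splits /phi (phiN_PF (erefl _)).
split.
  move=> H; apply: (sp_Yb (off := 0)) => x Hx.
  have xm : x < tree_size t by lia.
  have hr := R1 t 0 x Hx.
  have zm : rep t 0 x < tree_size t by lia.
  apply: (H _ (PF_blk _ (Ordinal xm)) (Ordinal zm) (Ordinal xm)).
    by rewrite inE /= rep_idem.
  by rewrite inE.
move=> /Yb_sp Hs B /PF_mem [x0 ->] x y; rewrite !inE => /eqP h1 /eqP h2.
rewrite -(Hs 0 x) ?ltn_ord // -(Hs 0 y) ?ltn_ord //.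
by rewrite -h1 -h2.
Qed.

Lemma part1 (n : nat) (t : tree) : tree_size t = n -> (splits t <-> (Ybe t \/ Ybo t)).
Proof. move=> _; rewrite splits_Yb; exact: Yb_bebo. Qed.

Section Fwd.
Variables (n : nat) (t : tree).
Hypothesis Ht : Ybe t.
Hypothesis Hs : tree_size t = n.*2.

Let g := fun x : 'I_(n.*2) => rep t 0 x.
Let g1 := fun i : 'I_n => rep t 0 i.*2.
Let g2 := fun i : 'I_n => rep t 0 i.*2.+1.

Lemma par x : x < n.*2 -> odd (rep t 0 x) = odd x.
Proof.
move=> xm; have : Yb t by apply/Yb_bebo; left.
move/Yb_sp => H; apply: H; lia.
Qed.

Lemma emb1 (i : 'I_n) (x : 'I_(n.*2)) : (x : nat) = i.*2 ->
  emb_odd [set j | g1 i == g1 j] = [set y | g x == g y].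
Proof.
move=> hx; apply/setP => y; rewrite !inE /g /g1 /=.
apply/existsP/idP.
  move=> [j /andP [jin /eqP yj]]; rewrite inE /= in jin.
  by rewrite yj hx.
move=> /eqP E.
have ym := ltn_ord y.
have oy : odd y = false.
  rewrite -par // -E par ?hx ?odd_double //; have := ltn_ord i; lia.
have jn : y./2 < n by lia.
have ey : y./2.*2 = y by have := odd_double_half y; rewrite oy; lia.
by exists (Ordinal jn); rewrite inE /= -hx E ey !eqxx.
Qed.

Lemma emb2 (i : 'I_n) (x : 'I_(n.*2)) : (x : nat) = i.*2.+1 ->
  emb_even [set j | g2 i == g2 j] = [set y | g x == g y].
Proof.
move=> hx; apply/setP => y; rewrite !inE /g /g2 /=.
apply/existsP/idP.
  move=> [j /andP [jin /eqP yj]]; rewrite inE /= in jin.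
  by rewrite yj hx.
move=> /eqP E.
have ym := ltn_ord y.
have oy : odd y = true.
  rewrite -par // -E par ?hx /= ?odd_double //; have := ltn_ord i; lia.
have jn : y./2 < n by lia.
have ey : y./2.*2.+1 = y by have := odd_double_half y; rewrite oy; lia.
by exists (Ordinal jn); rewrite inE /= -hx E ey !eqxx.
Qed.

Lemma p2_fwd : NCP (phiN t n.*2) /\
  exists Q1 Q2 : {set {set 'I_n}}, [/\ NCP Q1, NCP Q2 & phiN t n.*2 = pcup Q1 Q2].
Proof.
rewrite (phiN_PF Hs); split.
  apply: PF_NCP => a b c d ab bc cd; apply: rep_nc4 => //; rewrite Hs //.
exists (PF g1), (PF g2); split.
- apply: PF_NCP => a b c d ab bc cd; rewrite /g1; apply: rep_nc4; try lia.
  have := ltn_ord d; lia.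
- apply: PF_NCP => a b c d ab bc cd; rewrite /g2; apply: rep_nc4; try lia.
  have := ltn_ord d; lia.
apply/setP => B; rewrite /pcup inE; apply/idP/idP.
  move=> /PF_mem [x ->].
  have xm := ltn_ord x.
  have jn : x./2 < n by lia.
  case ox: (odd x).
    apply/orP; right; apply/imsetP; exists [set j | g2 (Ordinal jn) == g2 j].
      exact: PF_blk.
    rewrite (emb2 (x := x)) //=; have := odd_double_half x; rewrite ox; lia.
  apply/orP; left; apply/imsetP; exists [set j | g1 (Ordinal jn) == g1 j].
    exact: PF_blk.
  rewrite (emb1 (x := x)) //=; have := odd_double_half x; rewrite ox; lia.
case/orP => /imsetP [V /PF_mem [i ->] ->].
  have xm : i.*2 < n.*2 by have := ltn_ord i; lia.
  by rewrite (emb1 (x := Ordinal xm)) // PF_blk.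
have xm : i.*2.+1 < n.*2 by have := ltn_ord i; lia.
by rewrite (emb2 (x := Ordinal xm)) // PF_blk.
Qed.

End Fwd.

Lemma maxP (P : pred nat) lo k : (exists2 y, lo <= y < lo + k & P y) ->
  let M := \max_(lo <= y < lo + k | P y) y in
  [/\ P M, lo <= M < lo + k & forall y, lo <= y < lo + k -> P y -> y <= M].
Proof.
elim: k => [|k IH] [y0 Hy0 Py0]; first lia.
rewrite /= addnS big_mkcond big_nat_recr /=; last lia.
rewrite -big_mkcond.
change (\big[_/0]_(lo <= i < lo + k | P i) i) with (\max_(lo <= y < lo + k | P y) y).
case: (boolP (has P (index_iota lo (lo + k)))) => Hh.
  have [y1] : exists2 y, lo <= y < lo + k & P y.
    case/hasP: Hh => y; rewrite mem_index_iota => ? ?; by exists y.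
  move=> Hy1 Py1.
  have [a b c] := IH (ex_intro2 _ _ y1 Hy1 Py1).
  case: ifP => Pk.
    case: (leqP (\max_(lo <= y < lo + k | P y) y) (lo + k)) => Hl.
      split => //; first lia.
      move=> y Hy Py; case: (ltnP y (lo + k)) => Hyk; last lia.
      have := c y ltac:(lia) Py; lia.
    lia.
  rewrite maxn0; split => //; first lia.
  move=> y Hy Py; case: (ltnP y (lo + k)) => Hyk.
    apply: c => //; lia.
  move: Py; have -> : y = lo + k by lia.
  by rewrite Pk.
have yk : y0 = lo + k.
  apply/eqP; move: Hh; apply: contraNT => ne.
  apply/hasP; exists y0 => //; rewrite mem_index_iota; lia.
subst y0; rewrite Py0.
have -> : \max_(lo <= y < lo + k | P y) y = 0.
  rewrite big_nat_cond big1 // => y /andP [Hy Py].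
  exfalso; move: Hh => /hasP; apply; exists y => //; rewrite mem_index_iota.
  done.
rewrite max0n; split => //; first lia.
move=> y Hy Py; lia.
Qed.

Lemma max_split lo k hi (P : pred nat) : lo <= k -> k <= hi ->
  \max_(lo <= y < hi | P y) y = maxn (\max_(lo <= y < k | P y) y) (\max_(k <= y < hi | P y) y).
Proof. by move=> *; rewrite (@big_cat_nat _ _ _ k). Qed.

Section Build.
Variable s : nat -> nat -> bool.
Variable m : nat.
Hypothesis srefl : forall x, x < m -> s x x.
Hypothesis ssym : forall x y, s x y -> s y x.
Hypothesis strans : forall x y z, y < m -> s x y -> s y z -> s x z.
Hypothesis snc : forall a b c d, a < b -> b < c -> c < d -> d < m -> s a c -> s b d -> s a b.

Definition kk lo hi := lo + find (fun y => s y hi.-1) (iota lo (hi - lo)).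

Fixpoint build f lo hi :=
  match f with
  | 0 => Leaf
  | f'.+1 => if lo < hi then Node (build f' lo (kk lo hi)) (build f' (kk lo hi).+1 hi) else Leaf
  end.

Definition M lo hi x := \max_(lo <= y < hi | s x y) y.

Lemma kkP lo hi : lo < hi -> hi <= m ->
  [/\ lo <= kk lo hi < hi, s (kk lo hi) hi.-1 & forall y, lo <= y < kk lo hi -> ~~ s y hi.-1].
Proof.
move=> lh hm.
have Hh : has (fun y => s y hi.-1) (iota lo (hi - lo)).
  apply/hasP; exists hi.-1; first by rewrite mem_iota; lia.
  apply: srefl; lia.
have := Hh; rewrite has_find size_iota => Hf.
rewrite /kk; set F := find _ _ in Hf *.
split.
- lia.
- have := nth_find 0 Hh; rewrite -/F nth_iota //.
- move=> y Hy.
  have := before_find 0 (_ : y - lo < F).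
  rewrite nth_iota; last lia.
  have -> : lo + (y - lo) = y by lia.
  move=> H; rewrite H //; lia.
Qed.

Lemma Mspec lo hi x : lo <= x < hi -> hi <= m ->
  [/\ s x (M lo hi x), lo <= M lo hi x < hi & forall y, lo <= y < hi -> s x y -> y <= M lo hi x].
Proof.
move=> Hx hm.
have e : exists2 y, lo <= y < lo + (hi - lo) & s x y.
  by exists x; [lia | apply: srefl; lia].
have := @maxP (s x) lo (hi - lo) e.
by have -> : lo + (hi - lo) = hi by lia.
Qed.

Lemma build_spec f : forall lo hi, hi - lo <= f -> hi <= m ->
  tree_size (build f lo hi) = hi - lo /\
  forall x, lo <= x < hi -> rep (build f lo hi) lo x = M lo hi x.
Proof.
elim: f => [|f IH] lo hi Hf hm.
  split => /=; [lia | move=> x; lia].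
rewrite /=; case: (ltnP lo hi) => lh; last by split => //=; [lia | move=> x; lia].
have [k1 k3 k4] := kkP lh hm.
move: k1 => /andP [k1 k2].
set k := kk lo hi in k1 k2 k3 k4 *.
have [sl rl] := IH lo k ltac:(lia) ltac:(lia).
have [sr rr] := IH k.+1 hi ltac:(lia) ltac:(lia).
split; first by rewrite /= sl sr; lia.
move=> x Hx /=; rewrite sl.
have -> : lo + (k - lo) = k by lia.
case: (ltnP x k) => H1.
  rewrite rl; last lia.
  rewrite /M [RHS](@max_split _ k) /=; try lia.
  have -> : \max_(k <= y < hi | s x y) y = 0.
    rewrite big_nat_cond big1 // => y /andP [/andP [y1 y2] sxy].
    exfalso.
    case: (ltnP y hi.-1) => y3; last first.
      have : y = hi.-1 by lia.
      move=> E; subst y.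
      by move: (k4 x ltac:(lia)); rewrite sxy.
    case: (y =P k) => y4.
      subst y; move: (k4 x ltac:(lia)); rewrite (strans (y := k)) //; lia.
    have : s x k.
      apply: (snc (c := y) (d := hi.-1)) => //; lia.
    move=> sxk; move: (k4 x ltac:(lia)); rewrite (strans (y := k)) //; lia.
  by rewrite maxn0.
case: (x =P k) => H2.
  rewrite sr; subst x.
  have hh : lo <= k < hi by lia.
  have [a b c] := Mspec hh hm.
  have := c hi.-1 ltac:(lia) k3; lia.
rewrite rr; last lia.
rewrite /M [RHS](@max_split _ k.+1) /=; try lia.
have hh : k.+1 <= x < hi by lia.
have [a b c] := Mspec hh hm.
have xm : x < m by lia.
have d := c x ltac:(lia) (srefl xm).
symmetry; apply/maxn_idPr.
rewrite /M in b d.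
apply: leq_trans d; apply: leq_trans (_ : k <= x); last lia.
rewrite big_nat_cond.
elim/big_ind: _ => //; first by move=> u v; rewrite geq_max => -> ->.
move=> y /andP [/andP [y1 y2] _]; lia.
Qed.

Lemma M_eq x y : x < m -> y < m -> (M 0 m x == M 0 m y) = s x y.
Proof.
move=> xm ym; apply/eqP/idP.
  have hh : 0 <= x < m by lia.
  have [a c _] := Mspec hh (leqnn m).
  have hh' : 0 <= y < m by lia.
  have [b _ _] := Mspec hh' (leqnn m).
  move=> E; rewrite E in a c.
  have cm : M 0 m y < m by case/andP: c.
  exact: (strans cm a (ssym b)).
move=> sxy; rewrite /M big_nat_cond [RHS]big_nat_cond.
apply: eq_bigl => z; case: (boolP (0 <= z < m)) => //= zm.
apply/idP/idP => H.
  apply: (strans (y := x)) => //; exact: ssym.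
exact: (strans (y := y)).
Qed.

End Build.

Section SameP.
Variables (m : nat) (P : {set {set 'I_m}}).
Hypothesis HP : NCP P.

Definition sameP (x y : nat) :=
  [exists B in P, [exists i in B, val i == x] && [exists j in B, val j == y]].

Lemma sameP_ord (x y : 'I_m) : sameP x y = [exists B in P, (x \in B) && (y \in B)].
Proof.
apply/existsP/existsP => [] [B /and3P [BP h1 h2]]; exists B; rewrite BP /=.
  move: h1 h2 => /existsP [i /andP [iB /eqP /val_inj Ei]] /existsP [j /andP [jB /eqP /val_inj Ej]].
  by rewrite -Ei -Ej iB jB.
by apply/andP; split; apply/existsP; [exists x | exists y]; rewrite ?h1 ?h2 eqxx.
Qed.

Lemma sameP_refl x : x < m -> sameP x x.
Proof.
move=> xm; case: HP => /and3P [/eqP cov _ _] _.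
have : Ordinal xm \in cover P by rewrite cov inE.
move=> /bigcupP [B BP xB]; apply/existsP; exists B; rewrite BP /=.
by apply/andP; split; apply/existsP; exists (Ordinal xm); rewrite xB eqxx.
Qed.

Lemma sameP_sym x y : sameP x y -> sameP y x.
Proof.
move=> /existsP [B /and3P [BP h1 h2]]; apply/existsP; exists B; by rewrite BP h1 h2.
Qed.

Lemma sameP_trans x y z : y < m -> sameP x y -> sameP y z -> sameP x z.
Proof.
case: HP => /and3P [_ tI _] _ _.
move=> /existsP [B /and3P [BP h1 /existsP [j /andP [jB /eqP jy]]]].
move=> /existsP [B' /and3P [B'P /existsP [j' /andP [j'B' /eqP j'y]] h4]].
have jj : j = j' by apply: val_inj; rewrite jy j'y.
subst j'.
have E : B = B' by rewrite -(def_pblock tI BP jB) (def_pblock tI B'P j'B').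
subst B'; apply/existsP; exists B; by rewrite BP h1 h4.
Qed.

Lemma sameP_nc a b c d : a < b -> b < c -> c < d -> d < m -> sameP a c -> sameP b d -> sameP a b.
Proof.
case: HP => _ nc ab bc cd dm.
move=> /existsP [B /and3P [BP /existsP [ia /andP [iaB /eqP ea]] /existsP [ic /andP [icB /eqP ec]]]].
move=> /existsP [B' /and3P [B'P /existsP [ib /andP [ibB /eqP eb]] /existsP [id /andP [idB /eqP ed]]]].
have E : B = B'.
  apply: (nc ia ib ic id B B') => //; by rewrite ?ea ?eb ?ec ?ed.
subst B'; apply/existsP; exists B; rewrite BP /=.
by apply/andP; split; apply/existsP; [exists ia | exists ib]; rewrite ?iaB ?ibB ?ea ?eb eqxx.
Qed.

End SameP.

Lemma pcup_par n (Q1 Q2 : {set {set 'I_n}}) B (i j : 'I_(n.*2)) :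
  B \in pcup Q1 Q2 -> i \in B -> j \in B -> odd i = odd j.
Proof.
rewrite /pcup inE => /orP [] /imsetP [V _ ->]; rewrite !inE =>
  /existsP [a /andP [_ /eqP ->]] /existsP [b /andP [_ /eqP ->]] //=.
all: by rewrite !odd_double.
Qed.

Lemma p2_bwd n (P : {set {set 'I_(n.*2)}}) :
  NCP P -> (exists Q1 Q2 : {set {set 'I_n}}, [/\ NCP Q1, NCP Q2 & P = pcup Q1 Q2]) ->
  exists t : tree, [/\ Ybe t, tree_size t = n.*2 & phiN t (n.*2) = P].
Proof.
move=> HP [Q1 [Q2 [_ _ EP]]].
set m := n.*2.
have srefl := @sameP_refl m P HP.
have ssym := @sameP_sym m P.
have strans := @sameP_trans m P HP.
have snc := @sameP_nc m P HP.
have [Hsz Hrep] := build_spec srefl strans snc (f := m) (lo := 0) (hi := m)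
  ltac:(lia) (leqnn m).
set t := build (sameP P) m 0 m in Hsz Hrep.
rewrite subn0 in Hsz.
have Hsp : forall x, 0 <= x < 0 + tree_size t -> odd (rep t 0 x) = odd x.
  move=> x Hx; have xm : x < m by lia.
  rewrite Hrep; last lia.
  have hh : 0 <= x < m by lia.
  have [a b _] := Mspec srefl hh (leqnn m).
  move: a => /existsP [B /and3P [BP /existsP [i /andP [iB /eqP ei]] /existsP [j /andP [jB /eqP ej]]]].
  apply: etrans (esym (congr1 odd ej)) _; rewrite -ei; symmetry; apply: (pcup_par (Q1 := Q1) (Q2 := Q2) (B := B)) => //.
  by rewrite -EP.
have Yt := sp_Yb Hsp.
exists t; split => //.
- case/Yb_bebo: Yt => // /(proj1 (proj2 (Yb_be t))) /andP [_].
  by rewrite Hsz /m odd_double.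
- rewrite (phiN_PF Hsz); symmetry; apply: PF_eq; first by case: HP.
  move=> x y; rewrite -sameP_ord Hrep ?ltn_ord // Hrep ?ltn_ord //.
  exact: M_eq.
Qed.

Theorem lemma4 :
  (forall (n : nat) (t : tree), tree_size t = n -> (splits t <-> (Ybe t \/ Ybo t))) /\
  (forall (n : nat) (P : {set {set 'I_(n.*2)}}),
     (exists t : tree, [/\ Ybe t, tree_size t = n.*2 & phiN t (n.*2) = P]) <->
     (NCP P /\ exists Q1 Q2 : {set {set 'I_n}}, [/\ NCP Q1, NCP Q2 & P = pcup Q1 Q2])).
Proof.
split; first exact: part1.
move=> n P; split.
  by move=> [t [Yt St <-]]; apply: p2_fwd.
by move=> [HP HQ]; apply: p2_bwd.
Qed.
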